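(* Let $G$ and $H$ be finite simple graphs without isolated vertices and let $g=(V'_0,V'_1,V'_2)$ be a $\gamma_{tR}(G\times H)$-function. Then $\gamma_{tR}(G\times H)\ge |V(G)||V(H)|-(\Delta(H)\Delta(G)-2)|V'_2|$ and $|V'_2|\ge\frac{|V(G)||V(H)|-|V'_1|}{\Delta(H)\Delta(G)}$. Moreover, if in addition $|V(G)||V(H)|=\Delta(H)\Delta(G)|V'_2|+|V'_1|$, then $\gamma_{tR}(G\times H)=|V(G)||V(H)|-(\Delta(H)\Delta(G)-2)|V'_2|$.
   Context: $\Delta(X)$ denotes the maximum degree of a graph $X$. A total Roman dominating function on a graph $X$ without isolated vertices is a map $f:V(X)\to\{0,1,2\}$, written $f=(V_0,V_1,V_2)$ with $V_i=\{v:f(v)=i\}$, such that every vertex of $V_0$ has a neighbor in $V_2$ and the subgraph induced by $V_1\cup V_2$ has no isolated vertices; $\gamma_{tR}(X)$ is the minimum of $\sum_v f(v)$ over such $f$, and a $\gamma_{tR}(X)$-function attains it. The direct product $G\times H$ has vertex set $V(G)\times V(H)$, with $(g,h)(g',h')$ an edge iff $gg'\in E(G)$ and $hh'\in E(H)$. *)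

(* Defs.v *)
From HB Require Import structures.
From mathcomp Require Import all_boot all_order all_algebra.
Set Implicit Arguments. Unset Strict Implicit. Unset Printing Implicit Defensive.

Section Graphs.
Variable T : finType.
Implicit Types (e : rel T).

Definition simple_graph e := symmetric e /\ irreflexive e.
Definition no_isolated e := forall x : T, exists y, e x y.

Definition deg e (x : T) : nat := #|[set y | e x y]|.
Definition maxdeg e : nat := \max_(x : T) deg e x.

Definition Vclass (f : {ffun T -> 'I_3}) (i : nat) : {set T} :=
  [set x | nat_of_ord (f x) == i].
Definition weight (f : {ffun T -> 'I_3}) : nat := \sum_(x : T) nat_of_ord (f x).

Definition is_TRDF e (f : {ffun T -> 'I_3}) : bool :=
  [forall v, (nat_of_ord (f v) == 0) ==> [exists u, e v u && (nat_of_ord (f u) == 2)]]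
  && [forall v, (nat_of_ord (f v) != 0) ==> [exists u, e v u && (nat_of_ord (f u) != 0)]].

(* total Roman domination number: minimum weight of a TRDF
   (the initial value 2*|T| is an upper bound, attained by f = 2 whenever
   e has no isolated vertices) *)
Definition gammaTR e : nat :=
  \big[minn/(2 * #|T|)%N]_(f : {ffun T -> 'I_3} | is_TRDF e f) weight f.

Definition is_gammaTR_function e (f : {ffun T -> 'I_3}) : Prop :=
  is_TRDF e f /\ weight f = gammaTR e.
End Graphs.

Definition direct_prod (T1 T2 : finType) (e1 : rel T1) (e2 : rel T2) : rel (T1 * T2) :=
  fun u v => e1 u.1 v.1 && e2 u.2 v.2.

(* Main.v *)
Require Import Defs.
From mathcomp Require Import all_boot all_order all_algebra.
From mathcomp Require Import lra.
Import GRing.Theory Num.Theory.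
Local Open Scope ring_scope.

Lemma card_bigcup_le (I T : finType) (P : pred I) (F : I -> {set T}) :
  (#|\bigcup_(i | P i) F i| <= \sum_(i | P i) #|F i|)%N.
Proof.
elim/big_ind2: _ => // [|m A n B Am Bn]; first by rewrite cards0.
apply: leq_trans (leq_card_setU A B) _; exact: leq_add.
Qed.

Lemma key_count (TG TH : finType) (eG : rel TG) (eH : rel TH)
  (sG : simple_graph eG) (sH : simple_graph eH)
  (g : {ffun (TG * TH)%type -> 'I_3})
  (hg : is_TRDF (direct_prod eG eH) g) :
  (#|Vclass g 0| + #|Vclass g 2| <= maxdeg eH * maxdeg eG * #|Vclass g 2|)%N.
Proof.
set e := direct_prod eG eH.
have esym : symmetric e.
  move=> [a b] [c d]; rewrite /e /direct_prod /=.
  by rewrite (proj1 sG a c) (proj1 sH b d).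
case/andP: hg => /forallP h0 /forallP h1.
pose N (u : TG * TH) := [set y | e u y && (nat_of_ord (g y) == 0%N)].
have sub : Vclass g 0 \subset \bigcup_(u in Vclass g 2) N u.
  apply/subsetP => v; rewrite inE => v0.
  have /existsP [u /andP [evu fu]] := implyP (h0 v) v0.
  apply/bigcupP; exists u; first by rewrite inE.
  rewrite inE; apply/andP; split=> //; by rewrite esym.
have degb : forall u, (deg e u <= maxdeg eH * maxdeg eG)%N.
  move=> [a b].
  rewrite /deg.
  have -> : [set y | e (a, b) y] = setX [set y | eG a y] [set y | eH b y].
    by apply/setP => -[c d]; rewrite !inE.
  rewrite cardsX mulnC; apply: leq_mul; rewrite /maxdeg.
    by rewrite (bigD1 b) //= leq_maxl.
  by rewrite (bigD1 a) //= leq_maxl.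
have Nb : forall u, u \in Vclass g 2 -> (#|N u| + 1 <= maxdeg eH * maxdeg eG)%N.
  move=> u; rewrite inE => u2.
  have : (g u != 0 :> nat) by rewrite (eqP u2).
  move=> /(implyP (h1 u)) /existsP [w /andP [euw fw]].
  apply: leq_trans (degb u); rewrite addn1; apply: proper_card.
  apply/properP; split.
    by apply/subsetP => y; rewrite !inE => /andP [].
  by exists w; rewrite !inE ?euw // (negbTE fw) andbF.
have c0 := leq_trans (subset_leq_card sub) (card_bigcup_le _ _ _ _).
have S : (\sum_(u in Vclass g 2) (#|N u| + 1) <= \sum_(u in Vclass g 2) (maxdeg eH * maxdeg eG))%N.
  by apply: leq_sum => u; exact: Nb.
rewrite big_split /= sum1_card sum_nat_const /= in S.
rewrite mulnC; apply: leq_trans S.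
exact: leq_add c0 (leqnn _).
Qed.

Lemma sum_bool_card (T : finType) (P : pred T) :
  (\sum_(x : T) (P x : nat) = #|[set x | P x]|)%N.
Proof.
rewrite -sum1_card [RHS]big_mkcond /=; apply: eq_bigr => x _.
by rewrite inE; case: (P x).
Qed.

Lemma weightE (T : finType) (g : {ffun T -> 'I_3}) :
  weight g = (#|Vclass g 1| + 2 * #|Vclass g 2|)%N.
Proof.
have E : forall x, nat_of_ord (g x) = addn (nat_of_bool (nat_of_ord (g x) == 1%N)) (muln 2 (nat_of_bool (nat_of_ord (g x) == 2%N))).
  by move=> x; case: (g x) => -[|[|[|]]].
rewrite /weight (eq_bigr _ (fun x _ => E x)).
by rewrite big_split /= -big_distrr /= !sum_bool_card.
Qed.

Theorem corollary4p2 (TG TH : finType) (eG : rel TG) (eH : rel TH)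
  (sG : simple_graph eG) (sH : simple_graph eH)
  (nG : no_isolated eG) (nH : no_isolated eH)
  (g : {ffun (TG * TH)%type -> 'I_3})
  (hg : is_gammaTR_function (direct_prod eG eH) g) :
  let n : rat := (#|TG| * #|TH|)%N%:R in
  let D : rat := (maxdeg eH * maxdeg eG)%N%:R in
  let v1 : rat := #|Vclass g 1|%:R in
  let v2 : rat := #|Vclass g 2|%:R in
  let gam : rat := (gammaTR (direct_prod eG eH))%:R in
  [/\ gam >= n - (D - 2) * v2,
      v2 >= (n - v1) / D &
      (#|TG| * #|TH| = maxdeg eH * maxdeg eG * #|Vclass g 2| + #|Vclass g 1|)%N ->
        gam = n - (D - 2) * v2].
Proof.
move=> n D v1 v2 gam.
case: hg => hT hw.
have K := @key_count _ _ eG eH sG sH g hT.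
have W := @weightE _ g.
have Ncard : (#|TG| * #|TH| = #|Vclass g 0| + #|Vclass g 1| + #|Vclass g 2|)%N.
  rewrite -card_prod -[LHS]sum1_card [LHS]big_mkcond /=.
  have E : forall x : (TG * TH)%type, (if true then 1 else 0)%N = addn (addn (nat_of_bool (nat_of_ord (g x) == 0%N))
     (nat_of_bool (nat_of_ord (g x) == 1%N))) (nat_of_bool (nat_of_ord (g x) == 2%N)).
    by move=> x; case: (g x) => -[|[|[|]]].
  by rewrite (eq_bigr _ (fun x _ => E x)) !big_split /= !sum_bool_card.
have hgam : gam = (#|Vclass g 1| + 2 * #|Vclass g 2|)%N%:R by rewrite /gam -hw W.
have hn : n = #|Vclass g 0|%:R + v1 + v2 by rewrite /n Ncard !natrD.
have hK : #|Vclass g 0|%:R + v2 <= D * v2 by rewrite /D /v2 -natrD -natrM ler_nat.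
have hgam' : gam = v1 + 2 * v2 by rewrite hgam natrD natrM.
split.
- rewrite hgam' hn; lra.
- have [D0|Dpos] := eqVneq D 0.
    by rewrite D0 invr0 mulr0 /v2 ler0n.
  have Dp : 0 < D by rewrite lt0r Dpos /D ler0n.
  rewrite ler_pdivrMr // hn; lra.
- move=> Heq.
  have : n = D * v2 + v1 by rewrite /n Heq natrD natrM.
  rewrite hgam'; lra.
Qed.
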